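(* The following two statements are equivalent. (C) For every finite GCD-closed set $\mathcal{N}\subseteq\mathbb{N}^+$ with $\#\mathcal{N}\ge2$, there exist a prime $p$ and an integer $k\ge1$ such that $p^k$ divides at least one member of $\mathcal{N}$ and $\#\{n\in\mathcal{N}:p^k\mid n\}\le\tfrac12\#\mathcal{N}$. (D) (Intersection-closed sets conjecture) For every finite intersection-closed family $\mathcal{S}$ of finite sets with $\#\mathcal{S}\ge2$, there exists an element $x\in\bigcup\mathcal{S}$ such that $\#\{A\in\mathcal{S}:x\in A\}\le\tfrac12\#\mathcal{S}$.
   Context: $\mathbb{N}^+=\{1,2,3,\dots\}$. A nonempty $\mathcal{N}\subseteq\mathbb{N}^+$ is GCD-closed if $m,n\in\mathcal{N}$ implies $\gcd(m,n)\in\mathcal{N}$. A family $\mathcal{S}$ of sets is intersection-closed if $A,B\in\mathcal{S}$ implies $A\cap B\in\mathcal{S}$. *)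

(* Defs.v *)
From mathcomp Require Import all_boot.
Set Implicit Arguments. Unset Strict Implicit. Unset Printing Implicit Defensive.

(* A finite set of positive integers is represented by a duplicate-free list. *)
Definition gcd_closed (N : seq nat) : Prop :=
  forall m n, m \in N -> n \in N -> gcdn m n \in N.

Definition statement_C : Prop :=
  forall N : seq nat,
    uniq N -> all (fun n => 0 < n) N -> gcd_closed N -> 2 <= size N ->
    exists p k : nat,
      [/\ prime p, 1 <= k, has (fun n => p ^ k %| n) N &
          2 * count (fun n => p ^ k %| n) N <= size N].

Definition inter_closed (T : finType) (S : {set {set T}}) : Prop :=
  forall A B, A \in S -> B \in S -> A :&: B \in S.

Definition statement_D : Prop :=
  forall (T : finType) (S : {set {set T}}),
    inter_closed S -> 2 <= #|S| ->
    exists x : T,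
      x \in \bigcup_(A in S) A /\
      2 * #|[set A in S | x \in A]| <= #|S|.

(* Main.v *)
Require Import Defs.
From mathcomp Require Import all_boot.
Set Implicit Arguments. Unset Strict Implicit. Unset Printing Implicit Defensive.

Definition nextp m := s2val (prime_above m).
Lemma nextpP m : m < nextp m /\ prime (nextp m).
Proof. by rewrite /nextp; case: (prime_above m). Qed.
Definition nthp i := iter i.+1 nextp 0.
Lemma nthp_prime i : prime (nthp i).
Proof. by rewrite /nthp iterS; apply nextpP. Qed.
Lemma nthp_inj : injective nthp.
Proof.
apply: incn_inj; apply: leq_mono; apply: homo_ltn; first exact: ltn_trans.
by move=> i; rewrite /nthp (iterS i.+1); exact: (nextpP _).1.
Qed.

Section Code.
Variable T : finType.
Definition q (x : T) := nthp (enum_rank x).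
Lemma q_inj : injective q.
Proof. by move=> x y /nthp_inj /val_inj /enum_rank_inj. Qed.
Lemma q_prime x : prime (q x). Proof. exact: nthp_prime. Qed.
Definition code (A : {set T}) := \prod_(x in A) q x.
Lemma code_gt0 A : 0 < code A.
Proof. by apply: prodn_cond_gt0 => x _; exact: prime_gt0 (q_prime _). Qed.
Lemma logn_code p A : logn p (code A) = \sum_(x in A) (p == q x).
Proof.
suff [] : 0 < \prod_(x in A) q x /\ logn p (\prod_(x in A) q x) = \sum_(x in A) (p == q x) by [].
apply: (big_ind2 (fun a b => 0 < a /\ logn p a = b)).
- by rewrite logn1.
- by move=> a1 b1 a2 b2 [a1p <-] [a2p <-]; rewrite muln_gt0 a1p a2p lognM.
- by move=> x _; rewrite logn_prime ?prime_gt0 // q_prime.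
Qed.
Lemma logn_code_q x A : logn (q x) (code A) = (x \in A).
Proof.
rewrite logn_code; case: (boolP (x \in A)) => xA.
- rewrite (bigD1 x) //= eqxx big1 ?addn0 // => y /andP [_ yx].
  by apply/eqP; rewrite eqb0; apply: contra yx => /eqP/q_inj ->.
- rewrite big1 // => y yA; apply/eqP; rewrite eqb0.
  by apply: contra xA => /eqP/q_inj ->.
Qed.
Lemma code_gcd A B : gcdn (code A) (code B) = code (A :&: B).
Proof.
apply: eqn_from_log; [by rewrite gcdn_gt0 code_gt0 | exact: code_gt0 |] => p.
rewrite logn_gcd ?code_gt0 //.
case: (pickP (fun x => q x == p)) => [x /eqP <- | np].
- by rewrite !logn_code_q inE; case: (x \in A); case: (x \in B).
- by rewrite !logn_code !big1 // => y _; rewrite eq_sym np.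
Qed.
Lemma code_inj : injective code.
Proof.
move=> A B e; apply/setP => x; have := logn_code_q x A; rewrite e logn_code_q.
by case: (x \in A); case: (x \in B).
Qed.
End Code.

Lemma CtoD : statement_C -> statement_D.
Proof.
move=> C T S Sic S2.
pose N := [seq code A | A <- enum S].
have uN : uniq N by rewrite map_inj_uniq ?enum_uniq //; exact: code_inj.
have pN : all (fun n => 0 < n) N by apply/allP => n /mapP [A _ ->]; exact: code_gt0.
have gN : gcd_closed N.
  move=> m n /mapP [A hA ->] /mapP [B hB ->]; rewrite code_gcd; apply: map_f.
  by rewrite mem_enum; apply: Sic; rewrite -mem_enum.
have sN : size N = #|S| by rewrite size_map -cardE.
have N2 : 2 <= size N by rewrite sN.
have [p [k [pp k1 hN cN]]] := C N uN pN gN N2.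
move/hasP: hN => [n /mapP [A0 hA0 ->] dA0].
have lA0 : k <= logn p (code A0) by rewrite -pfactor_dvdn // code_gt0.
have [x xA0 ex] : exists2 x, x \in A0 & p = q x.
  move: lA0; rewrite logn_code.
  case: (pickP [pred x in A0 | p == q x]) => [x /andP [xA /eqP ->] | np]; first by exists x.
  rewrite big1 => [|y yA]; last by have := np y; rewrite /= yA /= => ->.
  by rewrite leqn0 => /eqP k0; rewrite k0 in k1.
have k_1 : k = 1.
  by move: lA0 k1; rewrite ex logn_code_q xA0; case: (k) => [|[]].
have dvdE A : (p ^ k %| code A) = (x \in A).
  by rewrite pfactor_dvdn ?code_gt0 // ex logn_code_q k_1; case: (x \in A).
exists x; split.
- have A0S : A0 \in S by move: hA0; rewrite mem_enum.
  by apply/bigcupP; exists A0.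
- rewrite -sN.
  have -> : #|[set A in S | x \in A]| = count (fun A : {set T} => x \in A) (enum S).
    rewrite -sum1_count big_enum_cond -sum1_card; apply: eq_bigl => A; by rewrite inE.
  suff <- : count (fun n => p ^ k %| n) N = count (fun A : {set T} => x \in A) (enum S) by [].
  by rewrite count_map; apply: eq_count => A /=; rewrite dvdE.
Qed.

Lemma DtoC : statement_D -> statement_C.
Proof.
move=> D N uN pN gN N2.
pose M := \max_(n <- N) n.
have leM n : n \in N -> n <= M.
  by move=> h; exact: (@leq_bigmax_seq _ N xpredT id n h).
pose isPP (i : nat) := (1 < i) && (i == pdiv i ^ logn (pdiv i) i).
pose A n : {set 'I_M.+1} := [set i : 'I_M.+1 | isPP i && (i %| n)].
have H : forall m n, m \in N -> n \in N -> A m = A n -> forall p, logn p m <= logn p n.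
  move=> m n hm hn e p.
  have m0 := allP pN m hm; have n0 := allP pN n hn.
  case: (posnP (logn p m)) => [-> // | lp].
  have pp : prime p by move: (lp); rewrite logn_gt0 mem_primes => /and3P [].
  have [e' he] : exists e', logn p m = e'.+1 by exists (logn p m).-1; rewrite prednK.
  have hd : p ^ e'.+1 %| m by rewrite -he pfactor_dvdnn.
  have hle : p ^ e'.+1 < M.+1.
    by rewrite ltnS; apply: leq_trans (dvdn_leq m0 hd) (leM m hm).
  have : Ordinal hle \in A m.
    rewrite inE /= hd andbT /isPP pdiv_pfactor // pfactorK // eqxx andbT.
    by rewrite -{1}(expn0 p) ltn_exp2l ?prime_gt1.
  rewrite e inE /= => /andP [_ hdn].
  by rewrite he -pfactor_dvdn.
have Ainj : {in N &, injective A}.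
  move=> m n hm hn e; apply: eqn_from_log; [exact: allP pN m hm | exact: allP pN n hn |].
  by move=> p; apply/eqP; rewrite eqn_leq !H.
pose S := [set:: map A N].
have mS B : (B \in S) = (B \in map A N) by rewrite inE.
have uS : uniq (map A N) by rewrite map_inj_in_uniq.
have cardS (P : pred {set 'I_M.+1}) : #|[set B in S | P B]| = count P (map A N).
  rewrite -size_filter; transitivity #|filter P (map A N)|.
    by apply: eq_card => B; rewrite inE mS mem_filter andbC.
  by apply/card_uniqP; exact: filter_uniq.
have cS : #|S| = size N.
  have := cardS xpredT; rewrite count_predT size_map => <-.
  by apply: eq_card => B; rewrite inE andbT.
have ic : inter_closed S.
  move=> B C; rewrite !mS => /mapP [m hm ->] /mapP [n hn ->].
  have -> : A m :&: A n = A (gcdn m n).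
    by apply/setP => i; rewrite !inE dvdn_gcd; case: (isPP i).
  exact: map_f (gN m n hm hn).
have S2 : 2 <= #|S| by rewrite cS.
have [x [xU cx]] := D _ S ic S2.
move/bigcupP: xU => [B hB xB].
rewrite mS in hB; move/mapP: hB => [n0 hn0 eB].
rewrite eB inE in xB; move/andP: xB => [ppx dx].
have ppx' := ppx; move/andP: ppx' => [x1 /eqP xe].
exists (pdiv x), (logn (pdiv x) x); split.
- exact: pdiv_prime.
- rewrite lt0n; apply/eqP => h; move: xe; rewrite h expn0 => e1.
  by rewrite e1 in x1.
- by apply/hasP; exists n0 => //; rewrite -xe.
- rewrite -xe.
  rewrite cardS cS count_map in cx.
  suff <- : count (preim A (fun B => x \in B)) N = count (fun n => x %| n) N by [].
  by apply: eq_count => n /=; rewrite inE ppx.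
Qed.

Theorem corollary2 : statement_C <-> statement_D.
Proof. split; [exact: CtoD | exact: DtoC]. Qed.
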